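(* Let $(X,d)$ be a complete metric space, $\lambda>0$, and $\ell\in\mathrm{LSC}(X)$ bounded with $\inf_X\ell=0$. If $u,v\in\mathrm{LSC}(X)$ are, respectively, a bounded subsolution and a bounded supersolution of $(\mathcal{G}_\lambda)$, then $u\le v$ on $X$.
   Context: $\mathrm{LSC}(X)$ is the set of real-valued lower semicontinuous functions on $X$. Global slope: $G[u](x)=\sup_{y\neq x}\frac{(u(x)-u(y))_+}{d(x,y)}$ if $u(x)<+\infty$, $G[u](x)=+\infty$ otherwise. Equation $(\mathcal{G}_\lambda)$: $\lambda u+G[u]=\ell$ on $X$ with $\inf_Xu=0$. A subsolution is $u:X\to\mathbb{R}\cup\{+\infty\}$ with $\inf_Xu=0$ and $\lambda u+G[u]\le\ell$ on $X$; a supersolution is a lower semicontinuous $v:X\to\mathbb{R}\cup\{+\infty\}$ with $\inf_Xv=0$ and $\lambda v+G[v]\ge\ell$ on $X$. *)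

(* Defs.v *)
From Stdlib Require Import Reals.
From Coquelicot Require Import Coquelicot.
Open Scope R_scope.

Record is_metric {X : Type} (d : X -> X -> R) : Prop := {
  dist_eq0 : forall x y, d x y = 0 <-> x = y;
  dist_sym : forall x y, d x y = d y x;
  dist_tri : forall x y z, d x z <= d x y + d y z
}.

Definition cauchy_seq {X : Type} (d : X -> X -> R) (s : nat -> X) : Prop :=
  forall eps, 0 < eps -> exists N, forall m n, (N <= m)%nat -> (N <= n)%nat ->
    d (s m) (s n) < eps.

Definition converges_to {X : Type} (d : X -> X -> R) (s : nat -> X) (x : X) : Prop :=
  forall eps, 0 < eps -> exists N, forall n, (N <= n)%nat -> d (s n) x < eps.

Definition complete_metric {X : Type} (d : X -> X -> R) : Prop :=
  forall s, cauchy_seq d s -> exists x, converges_to d s x.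

Definition lsc {X : Type} (d : X -> X -> R) (u : X -> R) : Prop :=
  forall x t, t < u x -> exists delta, 0 < delta /\
    forall y, d x y < delta -> t < u y.

Definition bounded_fun {X : Type} (u : X -> R) : Prop :=
  exists M, forall x, Rabs (u x) <= M.

Definition inf_is_zero {X : Type} (u : X -> R) : Prop :=
  (forall x, 0 <= u x) /\ (forall eps, 0 < eps -> exists x, u x < eps).

Definition pos_part (r : R) : R := Rmax r 0.

(* Global slope G[u](x) = sup_{y <> x} (u x - u y)_+ / d x y, in Rbar
   (u is real-valued, so the "+oo if u(x) = +oo" branch never occurs).
   0 is included in the set: all quotients are >= 0, so this does not change
   the supremum, and it gives the value 0 when X = {x}. *)
Definition global_slope {X : Type} (d : X -> X -> R) (u : X -> R) (x : X) : Rbar :=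
  Lub_Rbar (fun r => r = 0 \/ exists y, y <> x /\ r = pos_part (u x - u y) / d x y).

Definition subsolution {X : Type} (d : X -> X -> R) (lam : R) (l u : X -> R) : Prop :=
  inf_is_zero u /\
  forall x, Rbar_le (Rbar_plus (Finite (lam * u x)) (global_slope d u x)) (Finite (l x)).

Definition supersolution {X : Type} (d : X -> X -> R) (lam : R) (l v : X -> R) : Prop :=
  lsc d v /\ inf_is_zero v /\
  forall x, Rbar_le (Finite (l x)) (Rbar_plus (Finite (lam * v x)) (global_slope d v x)).

(* Main.v *)
From Pilot Require Import Defs.
From Stdlib Require Import Reals Lra Lia ClassicalEpsilon Classical.
From Coquelicot Require Import Coquelicot.
Open Scope R_scope.

Lemma d_refl {X} (d : X -> X -> R) : is_metric d -> forall x, d x x = 0.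
Proof. intros [H _ _] x. apply H. reflexivity. Qed.

Lemma d_nonneg {X} (d : X -> X -> R) : is_metric d -> forall x y, 0 <= d x y.
Proof. intros Hm x y. pose proof (d_refl d Hm x).
  destruct Hm as [_ Hs Ht]. pose proof (Ht x y x). rewrite (Hs y x) in H0. lra. Qed.

Lemma small_inv (e : R) : 0 < e -> exists N, / INR (S N) < e.
Proof. intros He. destruct (archimed_cor1 e He) as [N [H1 H2]]. exists N.
  apply Rle_lt_trans with (/ INR N); auto.
  apply Rinv_le_contravar. apply lt_0_INR; auto. rewrite S_INR; lra. Qed.

Lemma inv_pos (n : nat) : 0 < / INR (S n).
Proof. apply Rinv_0_lt_compat. apply lt_0_INR. lia. Qed.

Lemma ekeland {X} (d : X -> X -> R) (f : X -> R) (eps : R) (x0 : X) :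
  is_metric d -> complete_metric d -> lsc d f -> (exists m, forall x, m <= f x) ->
  0 < eps -> exists xb, f xb <= f x0 /\ forall y, f xb <= f y + eps * d xb y.
Proof.
  intros Hm Hc Hf [mb Hmb] He.
  pose proof (d_refl d Hm) as Dr. pose proof (d_nonneg d Hm) as Dn.
  destruct Hm as [_ Ds Dt].
  set (S' := fun x y => f y + eps * d x y <= f x).
  assert (Srefl : forall x, S' x x). { intros x; unfold S'; rewrite Dr; lra. }
  assert (Strans : forall x y z, S' x y -> S' y z -> S' x z).
  { unfold S'; intros x y z H1 H2. pose proof (Dt x y z).
    assert (eps * d x z <= eps * d x y + eps * d y z) by nra. lra. }
  assert (Hstep : forall (n : nat) x, exists y, S' x y /\
            forall z, S' x z -> f y <= f z + / INR (S n)).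
  { intros n x. set (E := fun r => exists z, S' x z /\ r = - f z).
    assert (Hb : bound E). { exists (- mb). intros r [z [_ ->]]. specialize (Hmb z). lra. }
    assert (Hne : exists r, E r). { exists (- f x). exists x. split; auto. }
    destruct (completeness E Hb Hne) as [M [HM1 HM2]].
    pose proof (inv_pos n) as Hd.
    destruct (classic (exists y, S' x y /\ - f y > M - / INR (S n))) as [[y [Hy1 Hy2]]|Hno].
    - exists y. split; auto. intros z Hz. assert (- f z <= M) by (apply HM1; exists z; auto). lra.
    - exfalso. assert (M <= M - / INR (S n)); [|lra].
      apply HM2. intros r [z [Hz ->]].
      destruct (Rle_dec (- f z) (M - / INR (S n))); auto. exfalso; apply Hno. exists z. split; auto. lra. }
  set (step := fun n x => proj1_sig (constructive_indefinite_description _ (Hstep n x))).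
  assert (Hsp : forall n x, S' x (step n x) /\ forall z, S' x z -> f (step n x) <= f z + / INR (S n)).
  { intros n x. unfold step. destruct (constructive_indefinite_description _ (Hstep n x)); auto. }
  set (s := fun n => nat_rect (fun _ => X) x0 (fun k xk => step k xk) n).
  assert (Hs : forall n, s (S n) = step n (s n)) by reflexivity.
  assert (P2 : forall n k, S' (s n) (s (n + k)%nat)).
  { intros n k; induction k. rewrite Nat.add_0_r; auto.
    rewrite Nat.add_succ_r, Hs. eapply Strans; eauto. apply Hsp. }
  assert (P2' : forall n m, (n <= m)%nat -> S' (s n) (s m)).
  { intros n m Hnm. replace m with (n + (m - n))%nat by lia. apply P2. }
  assert (P3 : forall n m, (S n <= m)%nat -> eps * d (s (S n)) (s m) <= / INR (S n)).
  { intros n m Hnm. pose proof (P2' _ _ Hnm) as A. unfold S' in A.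
    assert (B : S' (s n) (s m)) by (eapply Strans; [apply Hsp| exact A]).
    destruct (Hsp n (s n)) as [_ C]. specialize (C _ B). rewrite <- Hs in C. lra. }
  assert (Hcs : cauchy_seq d s).
  { intros e He'. destruct (small_inv (e * eps / 2)) as [N HN]. { assert (0 < e * eps) by (apply Rmult_lt_0_compat; lra). lra. }
    exists (S N). intros m n Hm Hn. pose proof (P3 N m Hm). pose proof (P3 N n Hn).
    pose proof (Dt (s m) (s (S N)) (s n)). rewrite (Ds (s m) (s (S N))) in H1.
    assert (eps * d (s m) (s n) <= eps * d (s (S N)) (s m) + eps * d (s (S N)) (s n)).
    { rewrite <- Rmult_plus_distr_l. apply Rmult_le_compat_l; lra. }
    apply Rmult_lt_reg_l with eps; auto. rewrite (Rmult_comm eps e). lra. }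
  destruct (Hc s Hcs) as [xb Hxb].
  assert (P4 : forall n, S' (s n) xb).
  { intros n. unfold S'. destruct (Rle_dec (f xb + eps * d (s n) xb) (f (s n))) as [|Hn]; auto.
    exfalso. set (g := f xb + eps * d (s n) xb - f (s n)).
    assert (Hg : 0 < g) by (unfold g; lra).
    destruct (Hf xb (f xb - g / 2)) as [de [Hde Hde2]]. lra.
    destruct (Hxb (Rmin de (g / (2 * eps)))) as [N HN].
    { apply Rmin_pos; auto. apply Rdiv_lt_0_compat; lra. }
    set (m := Nat.max n N). specialize (HN m ltac:(lia)).
    assert (A : S' (s n) (s m)) by (apply P2'; lia). unfold S' in A.
    assert (B1 : d (s m) xb < de) by (eapply Rlt_le_trans; [exact HN| apply Rmin_l]).
    assert (B2 : d (s m) xb < g / (2 * eps)) by (eapply Rlt_le_trans; [exact HN| apply Rmin_r]).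
    specialize (Hde2 (s m)). rewrite Ds in Hde2. specialize (Hde2 B1).
    pose proof (Dt (s n) (s m) xb).
    assert (eps * d (s m) xb < g / 2).
    { apply Rlt_le_trans with (eps * (g / (2 * eps))). nra. right; field; lra. }
    assert (eps * d (s n) xb <= eps * d (s n) (s m) + eps * d (s m) xb) by nra.
    unfold g in *. lra. }
  exists xb. split.
  - specialize (P4 0%nat). unfold S' in P4. simpl in P4. pose proof (Dn x0 xb). nra.
  - intros y. destruct (Rle_dec (f xb) (f y + eps * d xb y)) as [|Hn]; auto. exfalso.
    assert (Hy : S' xb y) by (unfold S'; lra).
    assert (Hall : forall n, f xb <= f y + / INR (S n)).
    { intros n. assert (S' (s n) y) by (eapply Strans; eauto).
      destruct (Hsp n (s n)) as [_ C]. specialize (C _ H). rewrite <- Hs in C.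
      specialize (P4 (S n)). unfold S' in P4. pose proof (Dn (s (S n)) xb). nra. }
    pose proof (Dn xb y).
    destruct (small_inv (f xb - f y)) as [N HN]. nra.
    specialize (Hall N). lra.
Qed.

Lemma slope_ge {X} (d : X -> X -> R) (u : X -> R) x r :
  (r = 0 \/ exists y, y <> x /\ r = pos_part (u x - u y) / d x y) ->
  Rbar_le (Finite r) (global_slope d u x).
Proof. intros H. unfold global_slope. destruct (Lub_Rbar_correct
  (fun r => r = 0 \/ exists y, y <> x /\ r = pos_part (u x - u y) / d x y)) as [H1 _].
  apply H1. exact H. Qed.

Lemma sub_bound (a b r : R) (G : Rbar) :
  Rbar_le (Rbar_plus (Finite a) G) (Finite b) -> Rbar_le (Finite r) G -> a + r <= b.
Proof. destruct G as [g| |]; simpl; intros H1 H2; try contradiction; lra. Qed.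

Lemma sub_ineq {X} (d : X -> X -> R) lam (l u : X -> R) :
  is_metric d -> subsolution d lam l u ->
  forall x y, u x - u y <= (l x - lam * u x) * d x y.
Proof.
  intros Hm [_ Hs] x y. pose proof (d_nonneg d Hm) as Dn.
  destruct (classic (y = x)) as [->|Hne].
  - rewrite (d_refl d Hm). lra.
  - assert (Hd : 0 < d x y).
    { destruct (Dn x y) as [|H]; auto. exfalso. apply Hne. symmetry. apply (dist_eq0 d Hm). auto. }
    set (r := pos_part (u x - u y) / d x y).
    assert (Hr := sub_bound _ _ r _ (Hs x) (slope_ge d u x r (or_intror (ex_intro _ y (conj Hne eq_refl))))).
    assert (Hp : u x - u y <= pos_part (u x - u y)) by (unfold pos_part; apply Rmax_l).
    assert (Hrd : r * d x y = pos_part (u x - u y)) by (unfold r; field; lra).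
    assert (r * d x y <= (l x - lam * u x) * d x y) by (apply Rmult_le_compat_r; lra).
    lra.
Qed.

Lemma sub_nonneg {X} (d : X -> X -> R) lam (l u : X -> R) :
  subsolution d lam l u -> forall x, 0 <= l x - lam * u x.
Proof. intros [_ Hs] x. pose proof (sub_bound _ _ 0 _ (Hs x) (slope_ge d u x 0 (or_introl eq_refl))). lra. Qed.

Lemma super_ex {X} (d : X -> X -> R) (v : X -> R) x a b c :
  Rbar_le (Finite a) (Rbar_plus (Finite b) (global_slope d v x)) -> 0 <= c -> c < a - b ->
  exists y, y <> x /\ c < pos_part (v x - v y) / d x y.
Proof.
  intros H Hc Hcab. apply NNPP. intros Hno.
  assert (Hle : Rbar_le (global_slope d v x) (Finite c)).
  { unfold global_slope. destruct (Lub_Rbar_correct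
      (fun r => r = 0 \/ exists y, y <> x /\ r = pos_part (v x - v y) / d x y)) as [_ H2].
    apply H2. intros r [->|[y [Hy ->]]]; simpl; auto.
    destruct (Rle_dec (pos_part (v x - v y) / d x y) c); auto. exfalso. apply Hno.
    exists y. split; auto. lra. }
  revert H Hle. destruct (global_slope d v x) as [g| |]; simpl; intros; try contradiction; lra.
Qed.

Theorem theorem3p14 (X : Type) (d : X -> X -> R) (lam : R) (l u v : X -> R) :
  is_metric d -> complete_metric d -> 0 < lam ->
  lsc d l -> bounded_fun l -> inf_is_zero l ->
  lsc d u -> bounded_fun u -> subsolution d lam l u ->
  lsc d v -> bounded_fun v -> supersolution d lam l v ->
  forall x, u x <= v x.
Proof.
  intros Hm Hc Hlam _ [Ml HMl] _ _ [Mu HMu] Hsub Hv [Mv HMv] [_ [_ Hsup]] x0.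
  pose proof (d_nonneg d Hm) as Dn.
  destruct (Rle_dec (u x0) (v x0)) as [|Hgt]; auto. exfalso.
  set (w0 := u x0 - v x0). assert (Hw0 : 0 < w0) by (unfold w0; lra).
  set (L := Ml + lam * Mu).
  assert (HL : forall y, l y - lam * u y <= L).
  { intros y. unfold L. pose proof (HMl y). pose proof (HMu y).
    apply Rabs_le_between in H. apply Rabs_le_between in H0.
    assert (lam * (- u y) <= lam * Mu) by (apply Rmult_le_compat_l; lra). lra. }
  assert (HL0 : 0 <= L).
  { pose proof (HMl x0). pose proof (HMu x0). pose proof (Rabs_pos (l x0)). pose proof (Rabs_pos (u x0)).
    unfold L. assert (0 <= lam * Mu) by (apply Rmult_le_pos; lra). lra. }
  set (f := fun x => v x - u x).
  assert (Hf : lsc d f).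
  { intros x t Ht. unfold f in Ht. set (eta := (v x - u x - t) / 2).
    assert (Heta : 0 < eta) by (unfold eta; lra).
    destruct (Hv x (v x - eta)) as [de [Hde Hde2]]. lra.
    exists (Rmin de (eta / (L + 1))). split.
    { apply Rmin_pos; auto. apply Rdiv_lt_0_compat; lra. }
    intros y Hy. unfold f.
    assert (B1 : d x y < de) by (eapply Rlt_le_trans; [exact Hy| apply Rmin_l]).
    assert (B2 : d x y < eta / (L + 1)) by (eapply Rlt_le_trans; [exact Hy| apply Rmin_r]).
    specialize (Hde2 y B1).
    pose proof (sub_ineq d lam l u Hm Hsub y x) as S1. rewrite (Pilot.Defs.dist_sym d Hm y x) in S1.
    assert ((l y - lam * u y) * d x y <= L * d x y) by (apply Rmult_le_compat_r; auto).
    assert (L * d x y <= (L + 1) * d x y) by (pose proof (Dn x y); nra).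
    assert ((L + 1) * d x y < eta).
    { apply Rlt_le_trans with ((L + 1) * (eta / (L + 1))).
      apply Rmult_lt_compat_l; lra. right; field; lra. }
    unfold eta in *. lra. }
  assert (Hfb : exists m, forall x, m <= f x).
  { exists (- Mv - Mu). intros x. unfold f. pose proof (HMv x). pose proof (HMu x).
    apply Rabs_le_between in H. apply Rabs_le_between in H0. lra. }
  set (eps := lam * w0 / 2). assert (Heps : 0 < eps).
  { unfold eps. assert (0 < lam * w0) by (apply Rmult_lt_0_compat; lra). lra. }
  destruct (ekeland d f eps x0 Hm Hc Hf Hfb Heps) as [xb [Hxb1 Hxb2]].
  unfold f in Hxb1, Hxb2.
  assert (Hwb : lam * w0 <= lam * (u xb - v xb)) by (apply Rmult_le_compat_l; unfold w0 in *; lra).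
  pose proof (sub_nonneg d lam l u Hsub xb) as Hn.
  set (c := l xb - lam * v xb - eps).
  assert (Hc0 : 0 <= c).
  { unfold c, eps in *. assert (lam * (u xb - v xb) = lam * u xb - lam * v xb) by ring. lra. }
  destruct (super_ex d v xb (l xb) (lam * v xb) c (Hsup xb) Hc0) as [y [Hy Hcy]].
  { unfold c; lra. }
  assert (Hd : 0 < d xb y).
  { destruct (Dn xb y) as [|H]; auto. exfalso. apply Hy. symmetry. apply (dist_eq0 d Hm). auto. }
  assert (Hvy : c * d xb y < v xb - v y).
  { assert (Hp : c * d xb y < pos_part (v xb - v y)).
    { apply Rmult_lt_reg_r with (/ d xb y). apply Rinv_0_lt_compat; auto.
      replace (c * d xb y * / d xb y) with c by (field; lra). exact Hcy. }
    unfold pos_part, Rmax in Hp. destruct (Rle_dec (v xb - v y) 0); auto.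
    assert (0 <= c * d xb y) by (apply Rmult_le_pos; lra). lra. }
  pose proof (sub_ineq d lam l u Hm Hsub xb y) as Hu.
  specialize (Hxb2 y).
  assert (K : eps * d xb y <= (lam * (u xb - v xb) - eps) * d xb y).
  { apply Rmult_le_compat_r; [lra|]. unfold eps in *. lra. }
  assert (E1 : (lam * (u xb - v xb) - eps) * d xb y = c * d xb y - (l xb - lam * u xb) * d xb y)
    by (unfold c; ring).
  lra.
Qed.
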